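(* Let $R$ be a subring of a ring $S$, and assume that every semiprime factor ring of $R$ and of $S$ is left or right Goldie and that the prime radical of every factor ring of $R$ and of $S$ is nilpotent. (i) If $I$ is an ideal of $R$ and $J$ an ideal of $S$ with $V_R(J\cap R)\subseteq V_R(I)$, then $V_S(J)\subseteq V_S(I^S)$. (ii) $\lambda$ is a left adjoint to $\rho$ if and only if for all ideals $I$ of $R$ and $J$ of $S$, $V_S(J)\subseteq V_S(I^S)$ implies $V_R(J\cap R)\subseteq V_R(I)$.
   Context: $\operatorname{Spec}$ carries the Zariski topology, closed sets $V_A(X)=\{P\in\operatorname{Spec} A:P\supseteq X\}$; for $U\subseteq\operatorname{Spec} A$, $I(U)$ is the intersection of the primes in $U$. For an ideal $I$ of $R$, $I^S=\operatorname{ann}_S(S/SI)$. The functor $\lambda$ sends a closed $V\subseteq\operatorname{Spec} S$ to $V_R(I(V)\cap R)$; the functor $\rho$ sends a closed $V\subseteq\operatorname{Spec} R$ to $V_S(I(V)^S)$. ''$\lambda$ is a left adjoint to $\rho$'' means $\lambda U\subseteq V\iff U\subseteq\rho V$ for all closed $U\subseteq\operatorname{Spec} S$, $V\subseteq\operatorname{Spec} R$. *)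

(* Defs.v *)
From mathcomp Require Import all_boot all_algebra.
Set Implicit Arguments. Unset Strict Implicit. Unset Printing Implicit Defensive.
Import GRing.Theory.
Local Open Scope ring_scope.

Definition subsetP {T : Type} (A B : T -> Prop) : Prop := forall x, A x -> B x.

Section RingNotions.
Variable T : pzRingType.

Definition addsubgroup (A : T -> Prop) : Prop :=
  A 0 /\ (forall x y, A x -> A y -> A (x - y)).

Definition left_ideal (A : T -> Prop) : Prop :=
  addsubgroup A /\ (forall r x, A x -> A (r * x)).
Definition right_ideal (A : T -> Prop) : Prop :=
  addsubgroup A /\ (forall r x, A x -> A (x * r)).
Definition ideal (A : T -> Prop) : Prop := left_ideal A /\ right_ideal A.

Definition prime_ideal (P : T -> Prop) : Prop :=
  ideal P /\ ~ P 1 /\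
  (forall a b, (forall r, P (a * r * b)) -> P a \/ P b).

Definition VV (X : T -> Prop) : (T -> Prop) -> Prop :=
  fun P => prime_ideal P /\ subsetP X P.

Definition II (U : (T -> Prop) -> Prop) : T -> Prop :=
  fun x => forall P, U P -> prime_ideal P -> P x.

Definition closed_spec (U : (T -> Prop) -> Prop) : Prop :=
  exists X : T -> Prop, forall P, U P <-> VV X P.

Definition spec_sub (U V : (T -> Prop) -> Prop) : Prop :=
  forall P, prime_ideal P -> U P -> V P.

Definition prime_radical : T -> Prop := fun x => forall P, prime_ideal P -> P x.

Definition semiprime_ring : Prop := forall x, prime_radical x -> x = 0.

(* a subset N is nilpotent: N^n = 0 for some n, i.e. every product of
   n elements of N vanishes (N^n is generated by such products) *)
Definition nilpotent_set (N : T -> Prop) : Prop :=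
  exists n : nat, forall x : nat -> T, (forall i, (i < n)%N -> N (x i)) ->
    \prod_(i < n) x i = 0.

Definition lann (X : T -> Prop) : T -> Prop := fun r => forall x, X x -> r * x = 0.
Definition rann (X : T -> Prop) : T -> Prop := fun r => forall x, X x -> x * r = 0.

Definition set_eq (A B : T -> Prop) := forall x, A x <-> B x.

Definition acc_lann : Prop :=
  forall X : nat -> (T -> Prop),
    (forall n, subsetP (lann (X n)) (lann (X n.+1))) ->
    exists N, forall m, (N <= m)%N -> set_eq (lann (X m)) (lann (X N)).
Definition acc_rann : Prop :=
  forall X : nat -> (T -> Prop),
    (forall n, subsetP (rann (X n)) (rann (X n.+1))) ->
    exists N, forall m, (N <= m)%N -> set_eq (rann (X m)) (rann (X N)).

(* the family L_0, L_1, ... has direct sum: L n meets L_0+...+L_{n-1} in 0 *)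
Definition independent_family (L : nat -> (T -> Prop)) : Prop :=
  forall n (y : nat -> T) x, L n x -> (forall i, (i < n)%N -> L i (y i)) ->
    x = \sum_(i < n) y i -> x = 0.

(* finite uniform (Goldie) dimension: no infinite direct sum of nonzero
   left (resp. right) ideals *)
Definition finite_left_udim : Prop :=
  ~ exists L : nat -> (T -> Prop),
      (forall n, left_ideal (L n)) /\ (forall n, exists x, L n x /\ x <> 0) /\
      independent_family L.
Definition finite_right_udim : Prop :=
  ~ exists L : nat -> (T -> Prop),
      (forall n, right_ideal (L n)) /\ (forall n, exists x, L n x /\ x <> 0) /\
      independent_family L.

Definition left_goldie : Prop := acc_lann /\ finite_left_udim.
Definition right_goldie : Prop := acc_rann /\ finite_right_udim.

End RingNotions.

(* Factor rings of A are (up to isomorphism) the targets of surjective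
   ring morphisms out of A. *)
Definition semiprime_factors_goldie (A : pzRingType) : Prop :=
  forall (T : pzRingType) (f : {rmorphism A -> T}),
    (forall t : T, exists a, f a = t) ->
    semiprime_ring T -> left_goldie T \/ right_goldie T.

Definition factor_radicals_nilpotent (A : pzRingType) : Prop :=
  forall (T : pzRingType) (f : {rmorphism A -> T}),
    (forall t : T, exists a, f a = t) ->
    nilpotent_set (@prime_radical T).

Section Extension.
Variables (R S : pzRingType) (i : {rmorphism R -> S}).

(* J \cap R, R viewed as a subring of S via the embedding i *)
Definition contr (J : S -> Prop) : R -> Prop := fun r => J (i r).

Definition SI (I : R -> Prop) : S -> Prop :=
  fun x => exists n (s : 'I_n -> S) (a : 'I_n -> R),
    (forall k, I (a k)) /\ x = \sum_(k < n) s k * i (a k).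

(* I^S = ann_S(S/SI) = { s | s S \subseteq SI } *)
Definition extI (I : R -> Prop) : S -> Prop :=
  fun s => forall t : S, SI I (s * t).

Definition lambda_ (U : (S -> Prop) -> Prop) : (R -> Prop) -> Prop :=
  VV (contr (II U)).
Definition rho_ (V : (R -> Prop) -> Prop) : (S -> Prop) -> Prop :=
  VV (extI (II V)).

Definition left_adjoint_lambda_rho : Prop :=
  forall (U : (S -> Prop) -> Prop) (V : (R -> Prop) -> Prop),
    closed_spec U -> closed_spec V ->
    (spec_sub (lambda_ U) V <-> spec_sub U (rho_ V)).

End Extension.

(* Main.v *)
Require Import Defs.
From HB Require Import structures.
From mathcomp Require Import all_boot all_algebra.
From Stdlib Require Import ClassicalEpsilon Classical.
Set Implicit Arguments. Unset Strict Implicit. Unset Printing Implicit Defensive.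
Import GRing.Theory.
Local Open Scope ring_scope.
Local Open Scope quotient_scope.

Definition pb (P : Prop) : bool := if excluded_middle_informative P then true else false.
Lemma pbP P : reflect P (pb P).
Proof. rewrite /pb; case: excluded_middle_informative => h; by constructor. Qed.

Section Quot.
Variable A : pzRingType.
Variable K : A -> Prop.
Hypothesis hK : ideal K.

Lemma K0 : K 0. Proof. by case: hK => [[[h0 _] _] _]. Qed.
Lemma KB x y : K x -> K y -> K (x - y). Proof. by case: hK => [[[_ h] _] _]; apply: h. Qed.
Lemma KN x : K x -> K (- x). Proof. by move=> h; rewrite -sub0r; apply: KB => //; apply K0. Qed.
Lemma KD x y : K x -> K y -> K (x + y). Proof. by move=> h1 h2; rewrite -[y]opprK; apply: KB => //; apply: KN. Qed.
Lemma KMl r x : K x -> K (r * x). Proof. by case: hK => [[_ h] _]; apply: h. Qed.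
Lemma KMr r x : K x -> K (x * r). Proof. by case: hK => [_ [_ h]]; apply: h. Qed.

Definition eK (x y : A) : bool := pb (K (x - y)).
Lemma eK_refl : reflexive eK. Proof. by move=> x; apply/pbP; rewrite subrr; apply K0. Qed.
Lemma eK_sym : symmetric eK.
Proof.
move=> x y; apply/pbP/pbP => h; by rewrite -opprB; apply: KN.
Qed.
Lemma eK_trans : transitive eK.
Proof.
move=> y x z /pbP h1 /pbP h2; apply/pbP.
have -> : x - z = (x - y) + (y - z) by rewrite addrA subrK.
by apply: KD.
Qed.
Canonical eK_equiv := EquivRel eK eK_refl eK_sym eK_trans.
Definition Qt := {eq_quot eK}.
HB.instance Definition _ := Choice.copy Qt {eq_quot eK}.


Lemma piP (a b : A) : (\pi_Qt a = \pi_Qt b) <-> K (a - b).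
Proof. split; [move/eqmodP/pbP => //| move=> h; apply/eqmodP/pbP => //]. Qed.

Lemma reprE a : K (repr (\pi_Qt a) - a).
Proof. by apply/piP; rewrite reprK. Qed.

Definition qzero : Qt := \pi_Qt 0.
Definition qopp (x : Qt) : Qt := \pi_Qt (- repr x).
Definition qadd (x y : Qt) : Qt := \pi_Qt (repr x + repr y).
Definition qone : Qt := \pi_Qt 1.
Definition qmul (x y : Qt) : Qt := \pi_Qt (repr x * repr y).

Lemma qoppE a : qopp (\pi_Qt a) = \pi_Qt (- a).
Proof. apply/piP; rewrite -opprD; apply: KN; exact: reprE. Qed.
Lemma qaddE a b : qadd (\pi_Qt a) (\pi b) = \pi_Qt (a + b).
Proof.
apply/piP.
have -> : repr (\pi_Qt a) + repr (\pi_Qt b) - (a + b) =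
   (repr (\pi_Qt a) - a) + (repr (\pi_Qt b) - b).
  by rewrite opprD addrACA.
by apply: KD; apply: reprE.
Qed.
Lemma qmulE a b : qmul (\pi_Qt a) (\pi b) = \pi_Qt (a * b).
Proof.
apply/piP.
set a' := repr (\pi_Qt a); set b' := repr (\pi_Qt b).
have -> : a' * b' - a * b = (a' - a) * b' + a * (b' - b).
  by rewrite mulrBl mulrBr addrA subrK.
by apply: KD; [apply: KMr | apply: KMl]; apply: reprE.
Qed.

Lemma qaddA : associative qadd.
Proof. move=> x y z; elim/quotW: x=> x; elim/quotW: y=> y; elim/quotW: z=> z. by rewrite (qaddE y z) (qaddE x (y+z)) (qaddE x y) (qaddE (x+y) z) addrA. Qed.
Lemma qaddC : commutative qadd.
Proof. by move=> x y; elim/quotW: x=> x; elim/quotW: y=> y; by rewrite (qaddE x y) (qaddE y x) addrC. Qed.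
Lemma qadd0 : left_id qzero qadd.
Proof. by move=> x; elim/quotW: x=> x; rewrite /qzero (qaddE 0 x) add0r. Qed.
Lemma qaddN : left_inverse qzero qopp qadd.
Proof. by move=> x; elim/quotW: x=> x; rewrite qoppE (qaddE (-x) x) addNr. Qed.
Lemma qmulA : associative qmul.
Proof. by move=> x y z; elim/quotW: x=> x; elim/quotW: y=> y; elim/quotW: z=> z; by rewrite (qmulE y z) (qmulE x (y*z)) (qmulE x y) (qmulE (x*y) z) mulrA. Qed.
Lemma qmul1 : left_id qone qmul.
Proof. by move=> x; elim/quotW: x=> x; rewrite /qone (qmulE 1 x) mul1r. Qed.
Lemma qmulr1 : right_id qone qmul.
Proof. by move=> x; elim/quotW: x=> x; rewrite /qone (qmulE x 1) mulr1. Qed.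
Lemma qmulDl : left_distributive qmul qadd.
Proof. by move=> x y z; elim/quotW: x=> x; elim/quotW: y=> y; elim/quotW: z=> z; by rewrite (qaddE x y) (qmulE (x+y) z) (qmulE x z) (qmulE y z) (qaddE (x*z) (y*z)) mulrDl. Qed.
Lemma qmulDr : right_distributive qmul qadd.
Proof. by move=> x y z; elim/quotW: x=> x; elim/quotW: y=> y; elim/quotW: z=> z; by rewrite (qaddE y z) (qmulE x (y+z)) (qmulE x y) (qmulE x z) (qaddE (x*y) (x*z)) mulrDr. Qed.

HB.instance Definition _ := GRing.isPzRing.Build Qt qaddA qaddC qadd0 qaddN qmulA qmul1 qmulr1 qmulDl qmulDr.

Definition qpi (a : A) : Qt := \pi_Qt a.
Lemma qpi_add : {morph qpi : x y / x + y}.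
Proof. by move=> x y; rewrite /qpi -qaddE. Qed.
Lemma qpi_opp : {morph qpi : x / - x}.
Proof. by move=> x; rewrite /qpi -qoppE. Qed.
Lemma qpi_mul : {morph qpi : x y / x * y}.
Proof. by move=> x y; rewrite /qpi -qmulE. Qed.
Lemma qpi_1 : qpi 1 = 1. Proof. by []. Qed.
Lemma qpi_sub : {morph qpi : x y / x - y}.
Proof. by move=> x y; rewrite qpi_add qpi_opp. Qed.

HB.instance Definition _ := GRing.isZmodMorphism.Build A Qt qpi qpi_sub.
HB.instance Definition _ := GRing.isMultiplicative.Build A Qt qpi (conj qpi_mul qpi_1).

Lemma qpi_surj (t : Qt) : exists a, qpi a = t.
Proof. by exists (repr t); rewrite /qpi reprK. Qed.
Lemma qpi_ker a : qpi a = 0 <-> K a.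
Proof. rewrite /qpi; split => [/piP|h]; [by rewrite subr0 | apply/piP; by rewrite subr0]. Qed.
End Quot.

Lemma prime_ideal_ideal (T : pzRingType) (P : T -> Prop) : prime_ideal P -> ideal P.
Proof. by case. Qed.

Section Gen.
Variable A : pzRingType.

Lemma K_sum (K : A -> Prop) (hK : ideal K) m (F : 'I_m -> A) :
  (forall j, K (F j)) -> K (\sum_(j < m) F j).
Proof. move=> h; apply: (big_ind K (K0 hK) (KD hK)) => j _; exact: h. Qed.

Lemma II_ideal (U : (A -> Prop) -> Prop) : ideal (II U).
Proof.
split; split; try split.
- by move=> P _ hP; apply: (K0 (prime_ideal_ideal hP)).
- by move=> x y hx hy P hU hP; apply: (KB (prime_ideal_ideal hP)); [apply: hx|apply: hy].
- by move=> r x hx P hU hP; apply: (KMl (prime_ideal_ideal hP)); apply: hx.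
- by move=> P _ hP; apply: (K0 (prime_ideal_ideal hP)).
- by move=> x y hx hy P hU hP; apply: (KB (prime_ideal_ideal hP)); [apply: hx|apply: hy].
- by move=> r x hx P hU hP; apply: (KMr (prime_ideal_ideal hP)); apply: hx.
Qed.

Lemma nilp (K : A -> Prop) : factor_radicals_nilpotent A -> ideal K ->
  exists n, forall x : nat -> A, (forall k, (k < n)%N -> II (VV K) (x k)) ->
    K (\prod_(k < n) x k).
Proof.
move=> hN hK.
have [n hn] := hN _ (qpi hK) (@qpi_surj _ _ hK).
exists n => x hx.
apply/(qpi_ker hK).
have := hn (fun k => qpi hK (x k)); rewrite -rmorph_prod; apply => k hk P' hP'.
pose P a := P' (qpi hK a).
have hid := prime_ideal_ideal hP'.
have hP : prime_ideal P.
  split; [|split].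
  - split; split; try split.
    + by rewrite /P rmorph0; apply: (K0 hid).
    + by move=> a b ha hb; rewrite /P rmorphB; apply: (KB hid).
    + by move=> r a ha; rewrite /P rmorphM; apply: (KMl hid).
    + by rewrite /P rmorph0; apply: (K0 hid).
    + by move=> a b ha hb; rewrite /P rmorphB; apply: (KB hid).
    + by move=> r a ha; rewrite /P rmorphM; apply: (KMr hid).
  - by rewrite /P rmorph1; case: hP' => _ [].
  - move=> a b hab; case: hP' => _ [_ hpr]; apply: hpr => t.
    have [r <-] := @qpi_surj _ _ hK t.
    by rewrite -!rmorphM; apply: hab.
apply: (hx k hk P); last exact: hP.
split => // a ha.
by rewrite /P (proj2 (qpi_ker hK a) ha); apply: (K0 hid).
Qed.

Lemma prime_pow (P L : A -> Prop) : prime_ideal P ->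
  (forall r a, L a -> L (r * a)) ->
  forall n, (forall x : nat -> A, (forall k, (k < n)%N -> L (x k)) -> P (\prod_(k < n) x k)) ->
  forall a, L a -> P a.
Proof.
move=> hP hL n; elim: n => [|n IH] H.
  have := H (fun _ => 0) (fun k hk => ltac:(done)).
  by rewrite big_ord0; case: hP => _ [].
have [//|hnall] := classic (forall a, L a -> P a).
have [c hc'] := not_all_ex_not _ _ hnall.
have [hc hnc] := Classical_Prop.imply_to_and _ _ hc'.
apply: IH => x hx.
case: hP => hid [_ hpr].
have := hpr (\prod_(k < n) x k) c; case; last by move=> /hnc.
  move=> r; rewrite -mulrA.
  pose x' k := if (k < n)%N then x k else r * c.
  have := H x'.
  rewrite big_ord_recr /= /x' ltnn.
  under eq_bigr => k _ do rewrite ltn_ord.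
  apply => k hk; case: ifP => hkn; [exact: hx | exact: hL].
by [].
Qed.

End Gen.
Section Ext.
Variables (R S : pzRingType) (i : {rmorphism R -> S}).

Lemma SI_0 X : SI i X 0.
Proof. exists 0%N, (fun _ => 0), (fun _ => 0); split; [by case | by rewrite big_ord0]. Qed.

Lemma SI_gen X s a : X a -> SI i X (s * i a).
Proof. move=> h; exists 1%N, (fun _ => s), (fun _ => a); split => //; by rewrite big_ord1. Qed.

Lemma SI_add X z w : SI i X z -> SI i X w -> SI i X (z + w).
Proof.
move=> [n [s [a [ha ->]]]] [m [s' [a' [ha' ->]]]].
exists (n + m)%N, (fun k => match split k with inl j => s j | inr j => s' j end),
  (fun k => match split k with inl j => a j | inr j => a' j end); split.
  by move=> k; case: (split k).
rewrite big_split_ord /=; congr (_ + _); apply: eq_bigr => k _.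
  by have e : split (lshift m k) = inl k := unsplitK (inl k); rewrite e.
by have e : split (rshift n k) = inr k := unsplitK (inr k); rewrite e.
Qed.

Lemma SI_sum X m (F : 'I_m -> S) : (forall j, SI i X (F j)) -> SI i X (\sum_(j < m) F j).
Proof. move=> h; apply: (big_ind (SI i X) (SI_0 X) (@SI_add X)) => j _; exact: h. Qed.

Lemma SI_mull X w z : SI i X z -> SI i X (w * z).
Proof.
move=> [n [s [a [ha ->]]]]; exists n, (fun k => w * s k), a; split => //.
by rewrite mulr_sumr; apply: eq_bigr => k _; rewrite mulrA.
Qed.

Lemma SI_mulr X Y z c : SI i X z -> (forall a, X a -> Y (a * c)) -> SI i Y (z * i c).
Proof.
move=> [n [s [a [ha ->]]]] hY; exists n, s, (fun k => a k * c); split.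
  by move=> k; apply: hY.
by rewrite mulr_suml; apply: eq_bigr => k _; rewrite rmorphM mulrA.
Qed.

Lemma SI_mono X Y z : Defs.subsetP X Y -> SI i X z -> SI i Y z.
Proof. move=> hXY [n [s [a [ha ->]]]]; exists n, s, a; split => // k; exact: hXY. Qed.

Lemma SI_in (Q : S -> Prop) X z : ideal Q -> Defs.subsetP X (contr i Q) -> SI i X z -> Q z.
Proof.
move=> hQ hX [n [s [a [ha ->]]]]; apply: K_sum => // k.
by apply: (KMl hQ); apply: hX.
Qed.

Lemma extI_mull I r x : extI i I x -> extI i I (r * x).
Proof. by move=> h t; rewrite -mulrA; apply: SI_mull. Qed.

Definition prodset (M : R -> Prop) n (a : R) :=
  exists x : nat -> R, (forall k, (k < n)%N -> M (x k)) /\ a = \prod_(k < n) x k.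

Lemma prod_extI M n (y : nat -> S) : (forall k, (k < n)%N -> extI i M (y k)) ->
  forall t, SI i (prodset M n) ((\prod_(k < n) y k) * t).
Proof.
elim: n y => [|n IH] y hy t.
  rewrite big_ord0 mul1r -[t]mulr1 -(rmorph1 i); apply: SI_gen.
  by exists (fun _ => 0); split => //; rewrite big_ord0.
rewrite big_ord_recr /= -mulrA.
have [m [s [a [ha ->]]]] := hy n (ltnSn n) t.
rewrite mulr_sumr; apply: SI_sum => j; rewrite mulrA.
apply: (SI_mulr (X := prodset M n)).
  by apply: IH => k hk; apply: hy; apply: ltnW.
move=> b [x [hx ->]].
exists (fun k => if (k < n)%N then x k else a j); split.
  by move=> k hk; case: ifP => hkn; [apply: hx | apply: ha].
rewrite big_ord_recr /= ltnn; congr (_ * _); apply: eq_bigr => k _; by rewrite ltn_ord.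
Qed.

End Ext.
Section Main.
Variables (R S : pzRingType) (i : {rmorphism R -> S}).

Lemma contr_ideal (Q : S -> Prop) : ideal Q -> ideal (contr i Q).
Proof.
move=> hQ; rewrite /contr; split; split; try split.
- by rewrite rmorph0; apply: (K0 hQ).
- by move=> x y hx hy; rewrite rmorphB; apply: (KB hQ).
- by move=> r x hx; rewrite rmorphM; apply: (KMl hQ).
- by rewrite rmorph0; apply: (K0 hQ).
- by move=> x y hx hy; rewrite rmorphB; apply: (KB hQ).
- by move=> r x hx; rewrite rmorphM; apply: (KMr hQ).
Qed.

Lemma part_i : factor_radicals_nilpotent R ->
  forall (I : R -> Prop) (J : S -> Prop), ideal I -> ideal J ->
     spec_sub (VV (contr i J)) (VV I) ->
     spec_sub (VV J) (VV (extI i I)).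
Proof.
move=> hNR I J hI hJ h Q hQ [_ hJQ]; split => //.
have hK := contr_ideal (prime_ideal_ideal hQ).
have [n hn] := nilp hNR hK.
apply: (prime_pow hQ (@extI_mull _ _ i I) (n := n)) => x hx.
rewrite -[X in Q X]mulr1.
apply: (SI_in (prime_ideal_ideal hQ) _ (prod_extI hx 1)).
move=> b [x' [hx' ->]]; apply: hn => k hk P [hP hsub] _.
have := h P hP; case.
  by split => // r hr; apply: hsub; apply: hJQ.
by move=> _ hIP; apply: hIP; apply: hx'.
Qed.

Lemma rho_lem : factor_radicals_nilpotent R -> forall (I : R -> Prop) (Q : S -> Prop),
  ideal I -> prime_ideal Q -> Defs.subsetP (extI i I) Q -> Defs.subsetP (extI i (II (VV I))) Q.
Proof.
move=> hNR I Q hI hQ hIQ.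
have [n hn] := nilp hNR hI.
apply: (prime_pow hQ (@extI_mull _ _ i _) (n := n)) => x hx.
apply: hIQ => t; apply: (SI_mono _ (prod_extI hx t)).
by move=> b [x' [hx' ->]]; apply: hn.
Qed.

Lemma lambda_lem : factor_radicals_nilpotent S -> forall (J : S -> Prop) (P : R -> Prop),
  ideal J -> prime_ideal P -> Defs.subsetP (contr i J) P -> Defs.subsetP (contr i (II (VV J))) P.
Proof.
move=> hNS J P hJ hP hJP.
have [n hn] := nilp hNS hJ.
have hL : forall r a, contr i (II (VV J)) a -> contr i (II (VV J)) (r * a).
  by move=> r a ha; rewrite /contr rmorphM; apply: (KMl (II_ideal _)).
apply: (prime_pow hP hL (n := n)) => x hx.
apply: (hJP (\prod_(k < n) x k)); rewrite /contr rmorph_prod; apply: (hn (fun k => i (x k))) => k hk; exact: hx.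
Qed.

End Main.

Lemma closed_II (T : pzRingType) (U : (T -> Prop) -> Prop) P :
  closed_spec U -> prime_ideal P -> (U P <-> VV (II U) P).
Proof.
move=> [X hX] hP; split.
  by move=> hU; split => // x hx; apply: hx.
move=> [_ hsub]; apply/hX; split => // x hx; apply: hsub => P' hU' _.
by have [_ h] := (proj1 (hX P') hU'); apply: h.
Qed.

Theorem lemma3p12 (R S : nzRingType) (i : {rmorphism R -> S}) :
  injective i ->
  semiprime_factors_goldie R -> semiprime_factors_goldie S ->
  factor_radicals_nilpotent R -> factor_radicals_nilpotent S ->
  (forall (I : R -> Prop) (J : S -> Prop), ideal I -> ideal J ->
     spec_sub (VV (contr i J)) (VV I) ->
     spec_sub (VV J) (VV (extI i I)))
  /\
  (left_adjoint_lambda_rho i <->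
   (forall (I : R -> Prop) (J : S -> Prop), ideal I -> ideal J ->
      spec_sub (VV J) (VV (extI i I)) ->
      spec_sub (VV (contr i J)) (VV I))).
Proof.
move=> _ _ _ hNR hNS.
have hi := @part_i _ _ i hNR.
split => //; split.
- move=> hadj I J hI hJ h P hP [_ hJP].
  have cU : closed_spec (VV J) by exists J.
  have cV : closed_spec (VV I) by exists I.
  have h2 : spec_sub (VV J) (rho_ i (VV I)).
    move=> Q hQ hQJ; split => //.
    apply: (rho_lem hNR hI hQ); by case: (h Q hQ hQJ).
  have := proj2 (hadj _ _ cU cV) h2 P hP; apply.
  split => //; exact: (lambda_lem hNS hJ hP hJP).
- move=> hC U V cU cV.
  have hIU := II_ideal U; have hIV := II_ideal V.
  split.
  + move=> h Q hQ hU.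
    have := hi (II V) (II U) hIV hIU; apply => //; last by apply/(closed_II cU hQ).
    move=> P hP hPl; apply/(closed_II cV hP); exact: h.
  + move=> h P hP hPl; apply/(closed_II cV hP).
    apply: (hC _ _ hIV hIU) => // Q hQ hQU.
    apply: h => //; exact/(closed_II cU hQ).
Qed.
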